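(* Let $X$ be a set and let $S$ be any collection of self-maps of $X$. Let $M_S$ be the monoid consisting of the identity map and all finite compositions $\phi_n\circ\cdots\circ\phi_1$ with $\phi_i\in S$, $n\geq1$. Suppose $F=\{Q_1,\dots,Q_n\}$ is a finite subset of $X$ such that (1) $\phi(X\setminus F)\subseteq X\setminus F$ for all $\phi\in S$, and (2) for each $Q_i\in F$ there exists $f_i\in M_S$ with $f_i(Q_i)\notin F$. Then there exists $g\in M_S$ such that $g(Q_i)\notin F$ for all $Q_i\in F$. *)

(* Defs.v *)
From Stdlib Require Import List.
Import ListNotations.

Inductive in_monoid {X : Type} (S : (X -> X) -> Prop) : (X -> X) -> Prop :=
| mon_id : in_monoid S (fun x => x)
| mon_comp : forall (phi f : X -> X),
    S phi -> in_monoid S f -> in_monoid S (fun x => phi (f x)).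

(* Main.v *)
Require Import Defs.
From Stdlib Require Import List Classical.

Lemma mon_compose {X : Type} (S : (X -> X) -> Prop) f g :
  in_monoid S f -> in_monoid S g -> in_monoid S (fun x => f (g x)).
Proof.
  intros Hf Hg. induction Hf as [|phi f Hphi Hf IH].
  - exact Hg.
  - exact (mon_comp S phi (fun x => f (g x)) Hphi IH).
Qed.

Lemma mon_pres {X : Type} (S : (X -> X) -> Prop) (F : list X)
  (hinv : forall phi, S phi -> forall x, ~ In x F -> ~ In (phi x) F) f :
  in_monoid S f -> forall x, ~ In x F -> ~ In (f x) F.
Proof.
  intros Hf. induction Hf as [|phi f Hphi Hf IH]; intros x Hx.
  - exact Hx.
  - apply (hinv phi Hphi). apply IH. exact Hx.
Qed.

Theorem lemma4p1 (X : Type) (S : (X -> X) -> Prop) (F : list X)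
  (hinv : forall phi, S phi -> forall x, ~ In x F -> ~ In (phi x) F)
  (hesc : forall Q, In Q F -> exists f, in_monoid S f /\ ~ In (f Q) F) :
  exists g, in_monoid S g /\ forall Q, In Q F -> ~ In (g Q) F.
Proof.
  assert (H : forall L, incl L F -> exists g, in_monoid S g /\ forall Q, In Q L -> ~ In (g Q) F).
  { induction L as [|a L IH]; intros Hincl.
    - exists (fun x => x). split; [constructor | intros Q []].
    - destruct IH as [g [Hg HL]].
      { intros y Hy. apply Hincl. right. exact Hy. }
      destruct (Classical_Prop.classic (In (g a) F)) as [Hin | Hout].
      + destruct (hesc (g a) Hin) as [f [Hf Hfa]].
        exists (fun x => f (g x)). split.
        * apply mon_compose; assumption.
        * intros Q [<- | HQ].
          -- exact Hfa.
          -- apply (mon_pres S F hinv f Hf). apply HL. exact HQ.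
      + exists g. split; [exact Hg|]. intros Q [<- | HQ]; auto. }
  apply H. intros y Hy; exact Hy.
Qed.
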